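(* Let $N\ge K\ge 1$ be integers and let $\mathcal{S}$ be the collection of all subsets $S\subseteq[N]$ with $1\le |S|\le K$. For every $S\in\mathcal{S}$ and all $v,v^\star\in[0,1]^N$, $$\frac{1}{2(K+1)^4}\sum_{i\in S}(v_i-v^\star_i)^2\;\le\;\|\mu(S,v)-\mu(S,v^\star)\|_2^2\;\le\;2\,\mathbb{E}_{i\sim\mu(S,v^\star)}\big[\ell_{\log}(\mu(S,v),i)-\ell_{\log}(\mu(S,v^\star),i)\big].$$
   Context: For $S\in\mathcal{S}$ and $v\in[0,1]^N$, $\mu(S,v)$ is the probability distribution on $\{0,1,\dots,N\}$ (viewed as a vector in $\mathbb{R}^{N+1}$) given by $\mu_i(S,v)=\frac{v_i}{1+\sum_{j\in S}v_j}$ for $i\in S$, $\mu_0(S,v)=\frac{1}{1+\sum_{j\in S}v_j}$, and $\mu_i(S,v)=0$ for $i\notin S\cup\{0\}$. For a distribution $\mu$ on $\{0,\dots,N\}$ and an outcome $i$, the log loss is $\ell_{\log}(\mu,i)=-\log\mu_i$. *)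

(* Defs.v *)
From HB Require Import structures.
From mathcomp Require Import all_boot all_order all_algebra.
From mathcomp Require Import all_classical all_reals all_analysis.
Set Implicit Arguments. Unset Strict Implicit. Unset Printing Implicit Defensive.
Import Order.TTheory GRing.Theory Num.Theory.
Local Open Scope ring_scope.

(* Items are 'I_N (representing [N] = {1,...,N}); outcomes are option 'I_N,
   with None representing the no-purchase outcome 0. *)

Definition mnl {R : realType} {N : nat} (S : {set 'I_N}) (v : 'I_N -> R)
    (o : option 'I_N) : R :=
  match o with
  | None => 1 / (1 + \sum_(j in S) v j)
  | Some i => if i \in S then v i / (1 + \sum_(j in S) v j) else 0
  end.

Definition logloss {R : realType} {N : nat} (mu : option 'I_N -> R)
    (o : option 'I_N) : \bar R :=
  if 0 < mu o then ((- ln (mu o))%:E)%E else (+oo)%E.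

Definition expect {R : realType} {N : nat} (p : option 'I_N -> R)
    (f : option 'I_N -> \bar R) : \bar R :=
  \sum_(o : option 'I_N | (0 < p o)%R) ((p o)%:E * f o)%E.

Definition sqdist {R : realType} {N : nat} (p q : option 'I_N -> R) : R :=
  \sum_(o : option 'I_N) (p o - q o) ^+ 2.

(* Main.v *)
Require Import Defs.
From HB Require Import structures.
From mathcomp Require Import all_boot all_order all_algebra.
From mathcomp Require Import all_classical all_reals all_analysis.
From mathcomp Require Import ring lra.
Import Order.TTheory GRing.Theory Num.Theory.
Local Open Scope ring_scope.
Lemma sum_option {R : realType} (T : finType) (F : option T -> R) :
  \sum_(o : option T) F o = F None + \sum_(i : T) F (Some i).
Proof.
rewrite (bigD1 None) //=; congr (_ + _).
rewrite (reindex_omap Some (fun o => o)) /=; last by case.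
by apply: eq_bigl => j; rewrite eqxx.
Qed.

Section Mnl.
Context {R : realType} {N : nat} (S : {set 'I_N}) (v : 'I_N -> R).
Hypothesis hv : forall i, 0 <= v i <= 1.

Lemma sumv_ge0 : 0 <= \sum_(j in S) v j.
Proof. by apply: sumr_ge0 => i _; case/andP: (hv i). Qed.

Lemma D_gt0 : 0 < 1 + \sum_(j in S) v j.
Proof. have := sumv_ge0 => *; lra. Qed.

Lemma mnl_ge0 o : 0 <= mnl S v o.
Proof.
have D0 := D_gt0.
case: o => [i|] /=; last by rewrite divr_ge0 // ltW.
case: ifP => // _; have [vi0 _] := andP (hv i); rewrite divr_ge0 // ltW //.
Qed.

Lemma mnl_le1 o : mnl S v o <= 1.
Proof.
have D0 := D_gt0.
case: o => [i|] /=; last first.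
  by rewrite ler_pdivrMr // mul1r; have := sumv_ge0 => *; lra.
case: ifP => // iS; rewrite ler_pdivrMr // mul1r.
rewrite (bigD1 i) //=.
have : 0 <= \sum_(j in S | j != i) v j.
  by apply: sumr_ge0 => j _; case/andP: (hv j).
by case/andP: (hv i) => *; lra.
Qed.

Lemma mnl_sum : \sum_(o : option 'I_N) mnl S v o = 1.
Proof.
have D0 := D_gt0.
rewrite sum_option /=.
have -> : \sum_(i : 'I_N) (if i \in S then v i / (1 + \sum_(j in S) v j) else 0)
   = \sum_(i in S) v i / (1 + \sum_(j in S) v j) by rewrite [RHS]big_mkcond.
by rewrite -mulr_suml -mulrDl divff // gt_eqF.
Qed.
End Mnl.

Lemma sumv_le {R : realType} {N : nat} (S : {set 'I_N}) (v : 'I_N -> R) :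
  (forall i, 0 <= v i <= 1) -> \sum_(j in S) v j <= #|S|%:R.
Proof.
move=> hv; apply: (@le_trans _ _ (\sum_(j in S) (1 : R))).
  by apply: ler_sum => j _; have /andP[] := hv j.
by rewrite sumr_const.
Qed.

Lemma part1 {R : realType} (N K : nat) (S : {set 'I_N}) (hS : (#|S| <= K)%N)
    (v vs : 'I_N -> R)
    (hv : forall i, 0 <= v i <= 1) (hvs : forall i, 0 <= vs i <= 1) :
  1 / (2 * (K%:R + 1) ^+ 4) * \sum_(i in S) (v i - vs i) ^+ 2
    <= sqdist (mnl S v) (mnl S vs).
Proof.
set A := 1 + \sum_(j in S) v j.
set B := 1 + \sum_(j in S) vs j.
have A0 : 0 < A := D_gt0 S v hv.
have B0 : 0 < B := D_gt0 S vs hvs.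
have kK : (#|S|%:R : R) <= K%:R by rewrite ler_nat.
have AM : A <= K%:R + 1 by have := sumv_le S v hv; rewrite /A; lra.
set M := K%:R + 1.
have M1 : 1 <= M by rewrite /M; have : (0 : R) <= K%:R by []; lra.
have M0 : 0 < M by lra.
set y := 1 / A - 1 / B.
set X := \sum_(i in S) (v i / A - vs i / B) ^+ 2.
have sqE : sqdist (mnl S v) (mnl S vs) = y ^+ 2 + X.
  rewrite /sqdist sum_option /=; congr (_ + _).
  rewrite [X]big_mkcond /=; apply: eq_bigr => i _.
  by case: ifP => _ //; rewrite subrr expr2 mulr0.
have pt : forall i, (v i - vs i) ^+ 2 <= 2 * M ^+ 2 * ((v i / A - vs i / B) ^+ 2 + y ^+ 2).
  move=> i; set x := v i / A - vs i / B.
  have E : v i - vs i = A * x - A * vs i * y.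
    by rewrite /x /y; field; rewrite !gt_eqF.
  rewrite E.
  have /andP[s0 s1] := hvs i.
  have h1 : (A * x - A * vs i * y) ^+ 2 <= 2 * (A ^+ 2 * x ^+ 2) + 2 * (A ^+ 2 * (vs i ^+ 2 * y ^+ 2)).
    have := sqr_ge0 (A * x + A * vs i * y). rewrite !expr2. lra.
  have h2 : A ^+ 2 <= M ^+ 2 by rewrite lerXn2r // ?nnegrE ltW // (lt_le_trans A0).
  have h3 : vs i ^+ 2 * y ^+ 2 <= y ^+ 2.
    by rewrite ler_piMl ?sqr_ge0 // expr_le1.
  have h4 : A ^+ 2 * x ^+ 2 <= M ^+ 2 * x ^+ 2 by rewrite ler_wpM2r ?sqr_ge0.
  have h5 : A ^+ 2 * (vs i ^+ 2 * y ^+ 2) <= M ^+ 2 * y ^+ 2.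
    apply: le_trans (ler_wpM2r (sqr_ge0 y) h2).
    by rewrite ler_wpM2l ?sqr_ge0.
  lra.
have T_le : \sum_(i in S) (v i - vs i) ^+ 2 <= 2 * M ^+ 2 * (X + #|S|%:R * y ^+ 2).
  apply: le_trans (ler_sum _ (fun i _ => pt i)) _.
  by rewrite -mulr_sumr big_split /= sumr_const -[y ^+ 2 *+ #|S|]mulr_natl.
rewrite sqE.
have X0 : 0 <= X by apply: sumr_ge0 => i _; exact: sqr_ge0.
have y0 : 0 <= y ^+ 2 := sqr_ge0 y.
have M4 : M ^+ 4 = M ^+ 2 * M ^+ 2 by rewrite -exprD.
have M20 : 0 < M ^+ 2 by rewrite exprn_gt0 // (lt_le_trans ltr01).
have M21 : M <= M ^+ 2 by rewrite expr2 ler_peMl // (le_trans ler01).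
rewrite M4 mul1r mulrC ler_pdivrMr ?mulr_gt0 //.
apply: le_trans T_le _.
have ky : #|S|%:R * y ^+ 2 <= M ^+ 2 * y ^+ 2.
  by rewrite ler_wpM2r // (le_trans kK) // (le_trans _ M21) // /M lerDl.
have XM : X <= M ^+ 2 * X by rewrite ler_peMl // (le_trans M1).
have G : X + #|S|%:R * y ^+ 2 <= M ^+ 2 * (y ^+ 2 + X) by lra.
have -> : (y ^+ 2 + X) * (2 * (M ^+ 2 * M ^+ 2)) = 2 * M ^+ 2 * (M ^+ 2 * (y ^+ 2 + X)) by ring.
rewrite ler_wpM2l // mulr_ge0 // ltW.
all: by [].
Qed.
Section Key.
Context {R : realType}.
Variable q : R.
Let h (x : R) := x - q * ln x - (x - q) ^+ 2 / 2.

Let hder (x : R) : 0 < x -> is_derive x 1 h (1 - q * x^-1 - (x - q)).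
Proof.
move=> x0.
have := is_derive1_ln x0 => Hl.
rewrite /h.
apply: is_derive_eq.
rewrite !scaler0 !subr0 add0r -mulr2n. rewrite /GRing.scale /=.
have E (y : R) : 2^-1 * (y * 1 *+ 2) = y by rewrite mulr1 mulr2n; field.
by rewrite E. Qed.

Let hd1 (x : R) : 0 < x -> derive1 h x = (x - q) * (1 - x) / x.
Proof.
move=> x0; have Hd := hder _ x0; rewrite derive1E derive_val.
by field; rewrite gt_eqF.
Qed.

Lemma key_ineq (p : R) : 0 < q -> q <= 1 -> 0 < p -> p <= 1 ->
  (q - p) + (p - q) ^+ 2 / 2 <= q * (ln q - ln p).
Proof.
move=> q0 q1 p0 p1.
suff : h q <= h p by rewrite /h; lra.
have [pq|qp] := leP p q.
- apply: (@ler0_derive1_le_cc _ h p q) => //.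
  + move=> x; rewrite in_itv /= => /andP[px _].
    have Hd := hder _ (lt_trans p0 px); exact: ex_derive.
  + move=> x; rewrite in_itv /= => /andP[px xq].
    have x0 : 0 < x by apply: lt_trans px.
    rewrite hd1 // mulr_le0_ge0 ?invr_ge0 ?(ltW x0) //.
    rewrite mulr_le0_ge0 //; lra.
  + apply: derivable_within_continuous => x; rewrite in_itv /= => /andP[ax _].
    have Hd := hder _ (lt_le_trans p0 ax); exact: ex_derive.
  + by rewrite in_itv /= lexx pq.
  + by rewrite in_itv /= lexx pq.
- apply: (@ger0_derive1_le_cc _ h q p) => //.
  + move=> x; rewrite in_itv /= => /andP[px _].
    have Hd := hder _ (lt_trans q0 px); exact: ex_derive.
  + move=> x; rewrite in_itv /= => /andP[px xq].
    have x0 : 0 < x by apply: lt_trans px.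
    rewrite hd1 // divr_ge0 ?(ltW x0) //.
    rewrite mulr_ge0 //; lra.
  + apply: derivable_within_continuous => x; rewrite in_itv /= => /andP[ax _].
    have Hd := hder _ (lt_le_trans q0 ax); exact: ex_derive.
  + by rewrite in_itv /= lexx ltW.
  + by rewrite in_itv /= lexx ltW.
  + exact: ltW.
Qed.
End Key.
Lemma sq_le {R : realType} {N : nat} (P Q : option 'I_N -> R) :
  (forall o, 0 <= P o <= 1) -> (forall o, 0 <= Q o <= 1) ->
  \sum_o P o = 1 -> \sum_o Q o = 1 ->
  sqdist P Q <= 2 * \sum_(o | 0 < Q o) ((Q o - P o) + (P o - Q o) ^+ 2 / 2).
Proof.
move=> hP hQ sP sQ.
rewrite /sqdist (bigID (fun o => 0 < Q o)) /=.
move: sP; rewrite (bigID (fun o => 0 < Q o)) /= => sP.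
move: sQ; rewrite (bigID (fun o => 0 < Q o)) /= => sQ.
have Q0 : \sum_(o | ~~ (0 < Q o)) Q o = 0.
  apply: big1 => o; have /andP[h1 _] := hQ o.
  by rewrite -leNgt => h2; apply/le_anti; rewrite h1 h2.
have b_le : \sum_(o | ~~ (0 < Q o)) (P o - Q o) ^+ 2 <= \sum_(o | ~~ (0 < Q o)) P o.
  apply: ler_sum => o; have /andP[h1 _] := hQ o.
  rewrite -leNgt => h2; have -> : Q o = 0 by apply/le_anti; rewrite h1 h2.
  have /andP[p0 p1] := hP o.
  by rewrite subr0 expr2 ler_piMr.
have c0 : 0 <= \sum_(o | ~~ (0 < Q o)) P o.
  by apply: sumr_ge0 => o _; have /andP[] := hP o.
rewrite big_split /= sumrB -mulr_suml.
lra.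
Qed.

Lemma part2 {R : realType} {N : nat} (P Q : option 'I_N -> R) :
  (forall o, 0 <= P o <= 1) -> (forall o, 0 <= Q o <= 1) ->
  \sum_o P o = 1 -> \sum_o Q o = 1 ->
  ((sqdist P Q)%:E <= 2%:E * expect Q (fun o => logloss P o - logloss Q o))%E.
Proof.
move=> hP hQ sP sQ.
apply: (@le_trans _ _ ((2 * \sum_(o | 0 < Q o) ((Q o - P o) + (P o - Q o) ^+ 2 / 2))%:E)).
  by rewrite lee_fin; exact: sq_le.
rewrite EFinM; apply: lee_wpmul2l; first by rewrite lee_fin.
rewrite /expect -sumEFin; apply: lee_sum => o Qo.
rewrite /logloss Qo.
have /andP[_ q1] := hQ o; have /andP[p0 p1] := hP o.
case: ifP => Po.
- rewrite -EFinB -EFinM lee_fin.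
  have -> : - ln (P o) - - ln (Q o) = ln (Q o) - ln (P o) by rewrite opprK addrC.
  exact: key_ineq.
- rewrite /= muleC gt0_mulye ?leey // lte_fin.
Qed.

Theorem lemma3 (R : realType) (N K : nat) (hK1 : (1 <= K)%N) (hKN : (K <= N)%N)
    (S : {set 'I_N}) (hS : (1 <= #|S| <= K)%N)
    (v vs : 'I_N -> R)
    (hv : forall i, 0 <= v i <= 1) (hvs : forall i, 0 <= vs i <= 1) :
  1 / (2 * (K%:R + 1) ^+ 4) * \sum_(i in S) (v i - vs i) ^+ 2
    <= sqdist (mnl S v) (mnl S vs)
  /\ ((sqdist (mnl S v) (mnl S vs))%:E
    <= 2%:E * expect (mnl S vs)
         (fun o => logloss (mnl S v) o - logloss (mnl S vs) o))%E.
Proof.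
split.
- by apply: part1 => //; case/andP: hS.
- apply: part2.
  + by move=> o; rewrite mnl_ge0 ?mnl_le1.
  + by move=> o; rewrite mnl_ge0 ?mnl_le1.
  + exact: mnl_sum.
  + exact: mnl_sum.
Qed.
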